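(* Consider a single-core non-preemptive server of capacity $f>0$ and tasks $1,\dots,N$, all available at time $0$, task $a$ requiring $\alpha_a$ CPU cycles with deadline $\beta_a$. Let $\mathbf{s}$ be an optimal ordered set without outage and let $\mathbf{s}'=[s'(1),\dots,s'(P)]$ be the ordered set produced by the Optimal Job Scheduling algorithm. If there exists an index $i\in[1,P]$ such that $\alpha_{s(i)}<\alpha_{s'(i)}$ and $\beta_{s(i)}>\beta_{s'(i)}$, and $s(k)=s'(k)$ for all $k\in[1:i-1]$, then $s(i)\in\mathbf{s}'$.
   Context: An ordered set is a sequence of distinct tasks executed back-to-back from time $0$; the task in position $l$ completes at $\frac1f\sum_{k=1}^{l}\alpha_{s(k)}$ and is in outage if this exceeds its deadline. An optimal ordered set is an ordered set with no outage of maximum cardinality. Optimal Job Scheduling algorithm: let $\mathbf{c}=[c(1),\dots,c(N)]$ be the ordering of $[1:N]$ by nondecreasing $\alpha$ (ties broken by nonincreasing $\beta$) and $\mathbf{b}=[b(1),\dots,b(N)]$ the ordering of $[1:N]$ by nondecreasing $\beta$ (ties broken by nondecreasing $\alpha$). Initialize $\mathbf{q}=[q(1),\dots,q(N)]=\mathbf 0$ (entry $0$ denotes an empty slot, with $\alpha_0=0$). For $i=1,\dots,N$: find $i^*$ with $b(i^* )=c(i)$ and set $q(i^* )\gets b(i^* )$; if for some $j\in[i^*:N]$ with $q(j)\neq0$ we have $\sum_{k=1}^{j}\alpha_{q(k)}/f>\beta_{q(j)}$, reset $q(i^* )\gets0$. The output $\mathbf{s}'$ is the sequence of nonzero entries of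 $\mathbf{q}$ in order, of length $P$. *)

(* Defs.v *)
(* Tasks are the naturals 1..N; 0 denotes an empty slot. *)
From mathcomp Require Import all_boot all_order all_algebra.
Set Implicit Arguments. Unset Strict Implicit. Unset Printing Implicit Defensive.
Import Order.TTheory GRing.Theory Num.Theory.
Local Open Scope ring_scope.

Section Sched.
Variable R : realFieldType.
Variables (N : nat) (f : R) (alpha beta : nat -> R).

Definition alpha0 (a : nat) : R := if a == 0%N then 0 else alpha a.

Definition ordered_set (s : seq nat) : bool :=
  uniq s && all (fun a => (0 < a <= N)%N) s.

(* completion time of the task in position l (0-indexed) *)
Definition completion (s : seq nat) (l : nat) : R :=
  (\sum_(k < l.+1) alpha (nth 0%N s k)) / f.

Definition no_outage (s : seq nat) : Prop :=
  forall l, (l < size s)%N -> completion s l <= beta (nth 0%N s l).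

Definition optimal_ordered_set (s : seq nat) : Prop :=
  ordered_set s /\ no_outage s /\
  forall t, ordered_set t -> no_outage t -> (size t <= size s)%N.

Definition c_rel : rel nat :=
  fun x y => (alpha x < alpha y) || ((alpha x == alpha y) && (beta y <= beta x)).
Definition b_rel : rel nat :=
  fun x y => (beta x < beta y) || ((beta x == beta y) && (alpha x <= alpha y)).

Definition is_c_order (c : seq nat) : Prop :=
  perm_eq c (iota 1 N) /\ sorted c_rel c.
Definition is_b_order (b : seq nat) : Prop :=
  perm_eq b (iota 1 N) /\ sorted b_rel b.

Definition ojs_step (b : seq nat) (q : seq nat) (x : nat) : seq nat :=
  let istar := index x b in
  let q' := set_nth 0%N q istar x in
  if has (fun j => (nth 0%N q' j != 0%N) &&
                   (beta (nth 0%N q' j) <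
                      (\sum_(k < j.+1) alpha0 (nth 0%N q' k)) / f))
         (iota istar (N - istar))
  then q else q'.

Definition ojs_q (c b : seq nat) : seq nat := foldl (ojs_step b) (nseq N 0%N) c.

Definition ojs (c b : seq nat) : seq nat := [seq a <- ojs_q c b | a != 0%N].

End Sched.

(* Main.v *)
Require Import Defs.
From mathcomp Require Import all_boot all_order all_algebra.
From mathcomp Require Import lra.
Import Order.TTheory GRing.Theory Num.Theory.
Local Open Scope ring_scope.

Definition Invq (b q : seq nat) := forall k, nth 0%N q k != 0%N -> nth 0%N q k = nth 0%N b k.
Definition leq_q (q q' : seq nat) := forall k, nth 0%N q k != 0%N -> nth 0%N q' k = nth 0%N q k.

Lemma leq_q_refl q : leq_q q q. Proof. by []. Qed.
Lemma leq_q_trans q1 q2 q3 : leq_q q1 q2 -> leq_q q2 q3 -> leq_q q1 q3.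
Proof. move=> h1 h2 k nz; rewrite h2 ?h1 //. Qed.

Definition bad {R : realFieldType} N (f : R) (alpha beta : nat -> R) (b q : seq nat) (x : nat) :=
  let istar := index x b in
  let q' := set_nth 0%N q istar x in
  has (fun j => (nth 0%N q' j != 0%N) &&
                   (beta (nth 0%N q' j) <
                      (\sum_(k < j.+1) alpha0 alpha (nth 0%N q' k)) / f))
         (iota istar (N - istar)).

Lemma step_eq {R : realFieldType} N (f : R) alpha beta b q x :
  ojs_step N f alpha beta b q x =
  if bad N f alpha beta b q x then q else set_nth 0%N q (index x b) x.
Proof. by []. Qed.

Lemma Inv_set b q x : Invq b q -> x \in b -> Invq b (set_nth 0%N q (index x b) x).
Proof.
move=> hq xb k; rewrite nth_set_nth /=; case: ifP => [/eqP ->|_]; last exact: hq.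
by rewrite nth_index.
Qed.

Lemma le_set b q x : Invq b q -> x \in b -> leq_q q (set_nth 0%N q (index x b) x).
Proof.
move=> hq xb k nz; rewrite nth_set_nth /=; case: ifP => [/eqP ek|//].
by rewrite (hq k nz) ek nth_index.
Qed.

Lemma foldl_inv {R : realFieldType} N (f : R) alpha beta b l q :
  Invq b q -> all (fun z => z \in b) l ->
  Invq b (foldl (ojs_step N f alpha beta b) q l) /\
  leq_q q (foldl (ojs_step N f alpha beta b) q l).
Proof.
elim: l q => [|a l IH] q hq /= hl; first by split.
move/andP: hl => [ab hl].
have [h1 h2] : Invq b (ojs_step N f alpha beta b q a) /\
               leq_q q (ojs_step N f alpha beta b q a).
  rewrite step_eq; case: ifP => _; first by split.
  by split; [apply: Inv_set | apply: le_set].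
have [h3 h4] := IH _ h1 hl; split => //; exact: leq_q_trans h2 h4.
Qed.

Lemma foldl_src {R : realFieldType} N (f : R) alpha beta b l q k :
  Invq b q -> all (fun z => z \in b) l ->
  nth 0%N (foldl (ojs_step N f alpha beta b) q l) k != 0%N ->
  nth 0%N (foldl (ojs_step N f alpha beta b) q l) k = nth 0%N q k \/
  nth 0%N (foldl (ojs_step N f alpha beta b) q l) k \in l.
Proof.
elim: l q => [|a l IH] q hq /= hl; first by left.
move/andP: hl => [ab hl] nz.
set q1 := ojs_step N f alpha beta b q a.
have [h1 h2] := foldl_inv N f alpha beta b [:: a] q hq (introT andP (conj ab isT)).
rewrite /= -/q1 in h1 h2.
case: (IH q1 h1 hl nz) => [e|]; last by rewrite inE => ->; right; rewrite orbT.
move: e nz; rewrite /q1 step_eq; case: ifP => _ e; first by rewrite e; left.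
rewrite e nth_set_nth /=; case: ifP => _ nz; last by left.
by right; rewrite inE eqxx.
Qed.

Lemma find_ins {R : realFieldType} N (f : R) alpha beta b y iy l q :
  Invq b q -> all (fun z => z \in b) l -> nth 0%N q iy = 0%N ->
  nth 0%N (foldl (ojs_step N f alpha beta b) q l) iy = y -> y != 0%N ->
  exists qy, [/\ Invq b qy, leq_q q qy,
     leq_q qy (foldl (ojs_step N f alpha beta b) q l), nth 0%N qy iy = 0%N &
     index y b = iy /\ ~~ bad N f alpha beta b qy y].
Proof.
elim: l q => [|a l IH] q hq /= hl q0 qf ynz; first by rewrite -qf q0 eqxx in ynz.
move/andP: hl => [ab hl].
set q1 := ojs_step N f alpha beta b q a.
have [h1 h2] := foldl_inv N f alpha beta b [:: a] q hq (introT andP (conj ab isT)).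
rewrite /= -/q1 in h1 h2.
have [h3 h4] := foldl_inv N f alpha beta b l q1 h1 hl.
case: (eqVneq (nth 0%N q1 iy) 0%N) => z1.
  have [qy [i1 i2 i3 i4 [i5 i6]]] := IH q1 h1 hl z1 qf ynz.
  by exists qy; split => //; exact: leq_q_trans h2 i2.
have E := h4 iy z1; rewrite qf in E.
move: z1 E; rewrite /q1 step_eq; case: ifP => hb; first by rewrite q0 eqxx.
rewrite nth_set_nth /=; case: ifP => [/eqP ei|]; last by rewrite q0 eqxx.
move=> _ ey; subst a.
exists q; split => //; last by rewrite hb.
move: h2 h4; rewrite /q1 step_eq hb => h2 h4; exact: leq_q_trans h2 h4.
Qed.

Definition Ssum {R : realFieldType} (alpha : nat -> R) (q : seq nat) (j : nat) :=
  \sum_(k < j.+1) alpha0 alpha (nth 0%N q k).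

Lemma Ssum_S {R : realFieldType} (alpha : nat -> R) q j :
  Ssum alpha q j.+1 = Ssum alpha q j + alpha0 alpha (nth 0%N q j.+1).
Proof. by rewrite /Ssum big_ord_recr. Qed.

Lemma alpha0_0 {R : realFieldType} (alpha : nat -> R) : alpha0 alpha 0 = 0.
Proof. by []. Qed.

Lemma Ssum_set_lt {R : realFieldType} (alpha : nat -> R) q i v j :
  (j < i)%N -> Ssum alpha (set_nth 0%N q i v) j = Ssum alpha q j.
Proof.
move=> ji; apply: eq_bigr => k _; rewrite nth_set_nth /=.
by rewrite ifN_eq // neq_ltn (leq_ltn_trans _ ji) // -ltnS.
Qed.

Lemma Ssum_set {R : realFieldType} (alpha : nat -> R) q i v j :
  nth 0%N q i = 0%N -> (i <= j)%N ->
  Ssum alpha (set_nth 0%N q i v) j = Ssum alpha q j + alpha0 alpha v.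
Proof.
move=> q0; elim: j => [|j IH].
  rewrite leqn0 => /eqP i0; subst i.
  rewrite /Ssum !big_ord_recr !big_ord0 /= q0 alpha0_0; rewrite !add0r nth_set_nth.
by [].
rewrite leq_eqVlt => /orP [/eqP ei|ij].
  subst i; rewrite !Ssum_S Ssum_set_lt // nth_set_nth /= eqxx q0 alpha0_0.
  by rewrite addr0.
rewrite !Ssum_S IH // nth_set_nth /= ifN_eq; last by rewrite neq_ltn ij orbT.
by rewrite -!addrA (addrC (alpha0 alpha v)).
Qed.

Lemma alpha0_ge0 {R : realFieldType} (alpha : nat -> R) b q k :
  (forall z, z \in b -> 0 < alpha z) -> Invq b q ->
  0 <= alpha0 alpha (nth 0%N q k).
Proof.
move=> hpos hq; rewrite /alpha0; case: ifP => [_//|/negbT nz].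
rewrite (hq k nz); apply/ltW/hpos/mem_nth.
rewrite ltnNge; apply/negP => hk; have := hq k nz; rewrite (nth_default _ hk) => e.
by rewrite e eqxx in nz.
Qed.

Lemma Ssum_mono {R : realFieldType} (alpha : nat -> R) b q q' j :
  (forall z, z \in b -> 0 < alpha z) -> Invq b q' -> leq_q q q' ->
  Ssum alpha q j <= Ssum alpha q' j.
Proof.
move=> hpos hq' hle; apply: ler_sum => k _.
case: (eqVneq (nth 0%N q k) 0%N) => [->|nz]; first by rewrite alpha0_0; exact: alpha0_ge0 hpos hq'.
by rewrite (hle k nz).
Qed.

Lemma b_trans {R : realFieldType} (alpha beta : nat -> R) : transitive (b_rel alpha beta).
Proof.
move=> y x z; rewrite /b_rel => /orP[h1|/andP[/eqP e1 h1]] /orP[h2|/andP[/eqP e2 h2]]; apply/orP.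
- by left; exact: lt_trans h1 h2.
- by left; rewrite -e2.
- by left; rewrite e1.
- by right; rewrite e1 e2 eqxx /=; exact: le_trans h1 h2.
Qed.

Lemma c_trans {R : realFieldType} (alpha beta : nat -> R) : transitive (c_rel alpha beta).
Proof.
move=> y x z; rewrite /c_rel => /orP[h1|/andP[/eqP e1 h1]] /orP[h2|/andP[/eqP e2 h2]]; apply/orP.
- by left; exact: lt_trans h1 h2.
- by left; rewrite -e2.
- by left; rewrite e1.
- by right; rewrite e1 e2 eqxx /=; exact: le_trans h2 h1.
Qed.

Lemma b_mono {R : realFieldType} (alpha beta : nat -> R) b i j :
  sorted (b_rel alpha beta) b -> (i <= j)%N -> (j < size b)%N ->
  beta (nth 0%N b i) <= beta (nth 0%N b j).
Proof.
move=> hs; rewrite leq_eqVlt => /orP [/eqP -> //|ij] jb.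
have := sorted_ltn_nth (@b_trans R alpha beta) 0%N hs.
move=> /(_ i j); rewrite !inE => /(_ (ltn_trans ij jb) jb ij).
rewrite /b_rel => /orP [/ltW //|/andP [/eqP -> _] //].
Qed.

Lemma accept_bound {R : realFieldType} (f : R) (alpha beta : nat -> R) b q' iy :
  Invq b q' -> sorted (b_rel alpha beta) b -> 0 < f -> nth 0%N q' iy != 0%N ->
  (forall j, (iy <= j < size b)%N -> nth 0%N q' j != 0%N ->
      Ssum alpha q' j / f <= beta (nth 0%N q' j)) ->
  forall j, (iy <= j < size b)%N -> Ssum alpha q' j <= f * beta (nth 0%N b j).
Proof.
move=> hq hs fpos nzy hacc.
have direct j : (iy <= j < size b)%N -> nth 0%N q' j != 0%N ->
    Ssum alpha q' j <= f * beta (nth 0%N b j).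
  move=> hj nz; have := hacc j hj nz; rewrite ler_pdivrMr // (hq j nz) mulrC //.
elim=> [|j IH] hj.
  move: (hj); rewrite leqn0 => /andP [/eqP i0 _]; subst iy; exact: direct.
case: (eqVneq (nth 0%N q' j.+1) 0%N) => nz; last exact: direct.
move/andP: hj => [h1 h2].
have h1' : (iy <= j)%N.
  move: h1; rewrite leq_eqVlt => /orP [/eqP e|//]; by rewrite e nz eqxx in nzy.
rewrite Ssum_S nz alpha0_0 addr0; apply: (le_trans (IH _)).
  by rewrite h1' ltnW.
apply: ler_wpM2l; [exact: ltW | exact: (b_mono alpha beta b j (j.+1) hs)].
Qed.
Arguments leq_q_trans {q1 q2 q3}.

Lemma nth_nz_mem (q : seq nat) k : nth 0%N q k != 0%N -> nth 0%N q k \in q.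
Proof.
move=> nz; apply: mem_nth; rewrite ltnNge; apply/negP => hk.
by rewrite (nth_default _ hk) eqxx in nz.
Qed.

(* positions are 0-indexed: Rocq index i corresponds to the paper's i+1 *)
Theorem lemma2 (R : realFieldType) (N : nat) (f : R) (alpha beta : nat -> R)
  (c b s : seq nat) (i : nat) :
  0 < f ->
  (forall a, (0 < a <= N)%N -> 0 < alpha a) ->
  is_c_order N alpha beta c ->
  is_b_order N alpha beta b ->
  optimal_ordered_set N f alpha beta s ->
  let s' := ojs N f alpha beta c b in
  (i < size s')%N ->
  (i < size s)%N ->
  alpha (nth 0%N s i) < alpha (nth 0%N s' i) ->
  beta (nth 0%N s i) > beta (nth 0%N s' i) ->
  (forall k, (k < i)%N -> nth 0%N s k = nth 0%N s' k) ->
  nth 0%N s i \in s'.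
Proof.
move=> fpos apos [cperm csort] [bperm bsort] [/andP [suniq sall] _] s' Hi's Hi_s Ha Hb _.
set x := nth 0%N s i in Ha Hb *; set y := nth 0%N s' i in Ha Hb.
have xr : (0 < x <= N)%N by exact: (allP sall) x (mem_nth 0%N Hi_s).
have bsz : size b = N by rewrite (perm_size bperm) size_iota.
have memb z : (z \in b) = (0 < z <= N)%N by rewrite (perm_mem bperm) mem_iota add1n ltnS.
have memc z : (z \in c) = (0 < z <= N)%N by rewrite (perm_mem cperm) mem_iota add1n ltnS.
have buniq : uniq b by rewrite (perm_uniq bperm) iota_uniq.
have hpos z : z \in b -> 0 < alpha z by rewrite memb; exact: apos.
have ball : all (fun z => z \in b) c by apply/allP => z; rewrite memc memb.
have inv0 : Invq b (nseq N 0%N) by move=> k; rewrite nth_nseq; case: ifP.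
have xb : x \in b by rewrite memb.
have xnz : x != 0%N by rewrite -lt0n; case/andP: xr.
have yin : y \in s' by exact: mem_nth.
move: yin; rewrite /s' /ojs mem_filter => /andP [ynz yQ].
case: (boolP (x \in s')) => // xnin; exfalso.
move: xnin yQ ynz; rewrite /s' /ojs /ojs_q.
have xc : x \in c by rewrite memc.
move: ball csort; clear memc cperm.
case/splitPr: xc => c1 c2 ball csort.
rewrite foldl_cat /= => xnin yQ ynz.
move: ball; rewrite all_cat /= => /and3P [ball1 _ ball2].
set q0 := nseq N 0%N in xnin yQ.
set step := ojs_step N f alpha beta b in xnin yQ.
set qx := foldl step q0 c1 in xnin yQ.
have [invx le0x] := foldl_inv N f alpha beta b c1 q0 inv0 ball1.
have [invx1 lex1] := foldl_inv N f alpha beta b [:: x] qx invx (introT andP (conj xb isT)).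
simpl in invx1, lex1.
have [invQ le1Q] := foldl_inv N f alpha beta b c2 _ invx1 ball2.
set Q := foldl _ (ojs_step N f alpha beta b qx x) c2 in invQ le1Q xnin yQ.
set ix := index x b.
set iy := index y b.
have ixN : (ix < N)%N by rewrite -bsz index_mem.
have Qix : nth 0%N Q ix = 0%N.
  case: (eqVneq (nth 0%N Q ix) 0%N) => // nz; exfalso.
  have := @nth_nz_mem Q ix nz; rewrite (invQ ix nz) nth_index // => xQ.
  by move: xnin; rewrite mem_filter xnz xQ.
have lexQ : leq_q qx Q := leq_q_trans lex1 le1Q.
have qxix : nth 0%N qx ix = 0%N.
  case: (eqVneq (nth 0%N qx ix) 0%N) => // nz; exfalso.
  by move: Qix; rewrite (lexQ ix nz) => e; rewrite e eqxx in nz.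
have Hrej : bad N f alpha beta b qx x.
  apply: contraT => H; move: le1Q Qix; rewrite /Q step_eq (negbTE H) => le1Q.
  rewrite le1Q /ix nth_set_nth /= eqxx; first by move/eqP; rewrite (negbTE xnz).
  exact: xnz.
have QY : nth 0%N Q iy = y.
  have := nth_index 0%N yQ; set k := index y Q => ek.
  have nzk : nth 0%N Q k != 0%N by rewrite ek.
  have e2 := invQ k nzk; rewrite ek in e2.
  have kb : (k < size b)%N.
    rewrite ltnNge; apply/negP => hk; by rewrite e2 nth_default // eqxx in ynz.
  by rewrite /iy e2 index_uniq // -e2.
have stepx : ojs_step N f alpha beta b qx x = qx by rewrite step_eq Hrej.
have qxiy : nth 0%N qx iy = 0%N.
  case: (eqVneq (nth 0%N qx iy) 0%N) => // nz; exfalso.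
  have := foldl_src N f alpha beta b c1 q0 iy inv0 ball1.
  move=> /(_ nz) [e|yc1].
    by move: e; rewrite /q0 nth_nseq; case: ifP => _ e; rewrite -/qx e eqxx in nz.
  have : nth 0%N qx iy \in c1 := yc1.
  rewrite -(lexQ iy nz) QY => {}yc1.
  move: csort; rewrite sorted_pairwise; last exact: c_trans.
  rewrite pairwise_cat => /and3P [hall _ _].
  have := (allrelP hall) y x yc1 (mem_head _ _).
  rewrite /c_rel => /orP [h|/andP [/eqP e _]].
    by have := lt_trans Ha h; rewrite ltxx.
  by rewrite e ltxx in Ha.
have QY' : nth 0%N (foldl (ojs_step N f alpha beta b) qx c2) iy = y.
  by rewrite -QY /Q stepx.
have [qy [invy lexy leyQ qyiy [_ Hacc]]] :=
  find_ins N f alpha beta b y iy c2 qx invx ball2 qxiy QY' ynz.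
have nzQ : nth 0%N Q iy != 0%N by rewrite QY.
have ey := invQ iy nzQ.
rewrite QY in ey.
have yb : y \in b.
  rewrite -index_mem -/iy ltnNge; apply/negP => h.
  by rewrite ey nth_default // eqxx in ynz.
have iyN : (iy < N)%N by rewrite -bsz index_mem.
have exb : nth 0%N b ix = x by rewrite nth_index.
have iyix : (iy < ix)%N.
  case: (ltngtP iy ix) => // h; exfalso.
    have := sorted_ltn_nth (@b_trans R alpha beta) 0%N bsort.
    move=> /(_ ix iy); rewrite !inE bsz => /(_ ixN iyN h).
    rewrite exb -ey /b_rel => /orP [h1|/andP [/eqP e _]].
      by have := lt_trans h1 Hb; rewrite ltxx.
    by rewrite e ltxx in Hb.
  by move: Ha; rewrite -exb -h -ey ltxx.
move: Hrej; rewrite /bad /= -/ix => /hasP [j jin /andP [nzj ltj]].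
move: Hacc; rewrite /bad /= -/iy => /hasPn Hacc.
move: jin; rewrite mem_iota subnKC ?(ltnW ixN) // => /andP [ixj jN].
have invqx' := @Inv_set b qx x invx xb.
have invqy' := @Inv_set b qy y invy yb.
rewrite -/ix in invqx'; rewrite -/iy in invqy'.
have hacc' : forall j, (iy <= j < size b)%N -> nth 0%N (set_nth 0%N qy iy y) j != 0%N ->
   Ssum alpha (set_nth 0%N qy iy y) j / f <= beta (nth 0%N (set_nth 0%N qy iy y) j).
  move=> k /andP [k1 k2] nzk.
  have := Hacc k; rewrite mem_iota subnKC ?(ltnW iyN) // k1 -bsz k2 => /(_ isT).
  by rewrite nzk /= -leNgt.
have nziy : nth 0%N (set_nth 0%N qy iy y) iy != 0%N by rewrite nth_set_nth /= eqxx.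
have bnd := @accept_bound R f alpha beta b _ iy invqy' bsort fpos nziy hacc' j.
have bnd' : Ssum alpha (set_nth 0%N qy iy y) j <= f * beta (nth 0%N b j).
  apply: bnd; rewrite bsz jN andbT; exact: leq_trans (ltnW iyix) ixj.
rewrite (invqx' j nzj) ltr_pdivlMr // in ltj.
have e1 : Ssum alpha (set_nth 0%N qx ix x) j = Ssum alpha qx j + alpha x.
  by rewrite Ssum_set // /alpha0 (negbTE xnz).
have e2 : Ssum alpha (set_nth 0%N qy iy y) j = Ssum alpha qy j + alpha y.
  rewrite Ssum_set // ?/alpha0 ?(negbTE ynz) //; exact: leq_trans (ltnW iyix) ixj.
have mono : Ssum alpha qx j <= Ssum alpha qy j := @Ssum_mono R alpha b qx qy j hpos invy lexy.
have ltj' : beta (nth 0%N b j) * f < Ssum alpha (set_nth 0%N qx ix x) j := ltj.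
rewrite e1 in ltj'; rewrite e2 in bnd'.
lra.
Qed.
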